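(* Let $n,m\ge2$, $s>0$. The function $f:\Omega_{L_n,m}\to\mathbb R$, \[f(\xi)=\sum_{k=1}^{n-1}\sin\Big(\frac{\pi k}{n}\Big)\Big(\sum_{i=1}^k\xi(i)-\frac{mk}{n}\Big),\] is an eigenfunction of the generator $\mathcal L^{\mathrm{BB}(L_n,s,m)}$ with eigenvalue $\lambda=\frac{1}{n-1}\big(\cos(\pi/n)-1\big)$, i.e. $\mathcal L^{\mathrm{BB}(L_n,s,m)}f=\lambda f$.
   Context: $L_n$ is the line graph on $\{1,\dots,n\}$ with edges $\{k,k+1\}$, all weights 1. $\Omega_{L_n,m}=\{\xi\in\mathbb N_0^{\{1,\dots,n\}}:\sum_i\xi(i)=m\}$. $\mathcal L^{\mathrm{BB}(L_n,s,m)}g=\sum_{k=1}^{n-1}\frac{1}{n-1}(\mathcal P_{\{k,k+1\}}g-g)$, where $\mathcal P_{\{k,k+1\}}g(\xi)=\mathbb E[g(\xi')]$ with $\xi'(k)=X$, $\xi'(k+1)=\xi(k)+\xi(k+1)-X$, $\xi'(j)=\xi(j)$ otherwise, and $X\sim\mathrm{BetaBin}(\xi(k)+\xi(k+1),s,s)$. *)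

(* Defs.v *)
From Stdlib Require Import Reals Lra Lia List Arith.
Open Scope R_scope.

(* Sum of F i over lo <= i <= hi (empty if hi < lo). *)
Definition sumR (lo hi : nat) (F : nat -> R) : R :=
  fold_right (fun i acc => F i + acc) 0 (seq lo (S hi - lo)).

Definition sumN (lo hi : nat) (F : nat -> nat) : nat :=
  fold_right (fun i acc => (F i + acc)%nat) 0%nat (seq lo (S hi - lo)).

Fixpoint rising (x : R) (k : nat) : R :=
  match k with
  | O => 1
  | S k' => rising x k' * (x + INR k')
  end.

(* Beta-binomial pmf BetaBin(N, a, b) at j:
   C(N,j) B(j+a, N-j+b)/B(a,b) = C(N,j) (a)_j (b)_(N-j) / (a+b)_N. *)
Definition betabin_pmf (N : nat) (a b : R) (j : nat) : R :=
  C N j * rising a j * rising b (N - j) / rising (a + b) N.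

(* Configurations: xi : nat -> nat, sites 1..n. *)
Definition config := nat -> nat.

Definition upd (xi : config) (k x : nat) : config :=
  fun j => if Nat.eqb j k then x
           else if Nat.eqb j (S k) then (xi k + xi (S k) - x)%nat
           else xi j.

Definition P_edge (s : R) (k : nat) (g : config -> R) (xi : config) : R :=
  let N := (xi k + xi (S k))%nat in
  sumR 0 N (fun x => betabin_pmf N s s x * g (upd xi k x)).

Definition gen_BB (n : nat) (s : R) (g : config -> R) (xi : config) : R :=
  sumR 1 (n - 1) (fun k => / INR (n - 1) * (P_edge s k g xi - g xi)).

Definition in_Omega (n m : nat) (xi : config) : Prop :=
  (forall i, (i = 0 \/ n < i)%nat -> xi i = 0%nat) /\ sumN 1 n xi = m.

Definition f_eig (n m : nat) (xi : config) : R :=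
  sumR 1 (n - 1) (fun k =>
    sin (PI * INR k / INR n) *
    (sumR 1 k (fun i => INR (xi i)) - INR m * INR k / INR n)).

(* Main.v *)
Require Import Defs.
From Stdlib Require Import Reals Lra Lia List Arith.
Open Scope R_scope.

Lemma fr_acc (F : nat -> R) c l :
  fold_right (fun i acc => F i + acc) c l = fold_right (fun i acc => F i + acc) 0 l + c.
Proof. induction l; simpl. ring. rewrite IHl; ring. Qed.

Lemma sumR_nil lo hi F : (hi < lo)%nat -> sumR lo hi F = 0.
Proof. intros H; unfold sumR; replace (S hi - lo)%nat with 0%nat by lia; reflexivity. Qed.

Lemma sumR_S lo hi F : (lo <= S hi)%nat -> sumR lo (S hi) F = sumR lo hi F + F (S hi).
Proof.
  intros H; unfold sumR.
  replace (S (S hi) - lo)%nat with (S (S hi - lo)) by lia.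
  rewrite seq_S, fold_right_app.
  replace (lo + (S hi - lo))%nat with (S hi) by lia.
  rewrite fr_acc. unfold fold_right at 2. ring.
Qed.

Lemma sumR0 N F : sumR 0 N F = sum_f_R0 F N.
Proof.
  induction N; [unfold sumR; simpl; ring|].
  rewrite sumR_S by lia; rewrite IHN; reflexivity.
Qed.

Lemma sumR_lin lo hi F G u v :
  sumR lo hi (fun i => u * F i + v * G i) = u * sumR lo hi F + v * sumR lo hi G.
Proof.
  unfold sumR; generalize (seq lo (S hi - lo)); intro l; induction l; simpl. ring.
  rewrite IHl; ring.
Qed.

Lemma sumR_ext lo hi F G : (forall i, (lo <= i <= hi)%nat -> F i = G i) ->
  sumR lo hi F = sumR lo hi G.
Proof.
  intros H; unfold sumR.
  assert (H' : forall i, In i (seq lo (S hi - lo)) -> F i = G i).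
  { intros i Hi; apply in_seq in Hi; apply H; lia. }
  revert H'; generalize (seq lo (S hi - lo)); intro l; induction l; intros H'; simpl. ring.
  rewrite H' by (left; auto). rewrite IHl; auto. intros; apply H'; right; auto.
Qed.

Lemma sumN_INR lo hi F : INR (sumN lo hi F) = sumR lo hi (fun i => INR (F i)).
Proof.
  unfold sumN, sumR; generalize (seq lo (S hi - lo)); intro l; induction l; simpl. reflexivity.
  rewrite plus_INR, IHl; reflexivity.
Qed.

Lemma tele M g : sumR 1 M (fun k => g k - g (k - 1)%nat) = g M - g 0%nat.
Proof.
  induction M; [rewrite sumR_nil by lia; ring|].
  rewrite sumR_S by lia; rewrite IHM. simpl; rewrite Nat.sub_0_r; ring.
Qed.

Lemma ind0 k c hi : (hi < k)%nat -> sumR 1 hi (fun j => if Nat.eqb j k then c else 0) = 0.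
Proof.
  induction hi; intros H; [apply sumR_nil; lia|].
  rewrite sumR_S by lia; rewrite IHhi by lia.
  destruct (Nat.eqb_spec (S hi) k); [lia| ring].
Qed.

Lemma ind1 k c hi : (1 <= k <= hi)%nat -> sumR 1 hi (fun j => if Nat.eqb j k then c else 0) = c.
Proof.
  induction hi; intros H; [lia|].
  rewrite sumR_S by lia.
  destruct (Nat.eqb_spec (S hi) k).
  - rewrite ind0 by lia; ring.
  - rewrite IHhi by lia; ring.
Qed.

Lemma sf_lin N P Q u v : sum_f_R0 (fun x => u * P x + v * Q x) N = u * sum_f_R0 P N + v * sum_f_R0 Q N.
Proof. induction N; simpl. ring. rewrite IHN; ring. Qed.

Lemma sf_rev N : forall G, sum_f_R0 G N = sum_f_R0 (fun j => G (N - j)%nat) N.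
Proof.
  induction N; intros G; [simpl; reflexivity|].
  rewrite decomp_sum by lia. simpl pred.
  rewrite (IHN (fun i => G (S i))).
  change (sum_f_R0 (fun j => G (S N - j)%nat) (S N)) with
    (sum_f_R0 (fun j => G (S N - j)%nat) N + G (S N - S N)%nat).
  rewrite Nat.sub_diag.
  rewrite (sum_eq (fun i => G (S (N - i))) (fun j => G (S N - j)%nat)).
  - ring.
  - intros i Hi; f_equal; lia.
Qed.

Lemma C_0 k : C k 0 = 1.
Proof. unfold C; rewrite Nat.sub_0_r; simpl; field; apply INR_fact_neq_0. Qed.
Lemma C_nn k : C k k = 1.
Proof. unfold C; rewrite Nat.sub_diag; simpl; field; apply INR_fact_neq_0. Qed.

Lemma rising_S x k : rising x (S k) = rising x k * (x + INR k).
Proof. reflexivity. Qed.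

Lemma vdm a b N :
  sum_f_R0 (fun j => C N j * rising a j * rising b (N - j)) N = rising (a + b) N.
Proof.
  induction N.
  - simpl. rewrite C_0. ring.
  - simpl rising at 3. rewrite <- IHN.
    destruct N as [|M].
    + simpl. rewrite !C_0, C_nn. simpl. ring.
    + set (N := S M).
      set (A := fun i => C N i * rising a (S i) * rising b (N - i)).
      set (B := fun i => C N (S i) * rising a (S i) * rising b (N - i)).
      rewrite decomp_sum by lia. simpl pred.
      change (sum_f_R0 (fun i => C (S N) (S i) * rising a (S i) * rising b (S N - S i)) N)
        with (sum_f_R0 (fun i => C (S N) (S i) * rising a (S i) * rising b (S N - S i)) M
              + C (S N) (S N) * rising a (S N) * rising b (S N - S N)).
      rewrite (sum_eq _ (fun i => 1 * A i + 1 * B i)).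
      2:{ intros i Hi. unfold A, B. rewrite Nat.sub_succ. rewrite <- pascal by (unfold N; lia). ring. }
      rewrite sf_lin.
      rewrite <- (Rmult_comm (a + b + INR N)), (scal_sum _ N (a + b + INR N)).
      rewrite (sum_eq (fun i => C N i * rising a i * rising b (N - i) * (a + b + INR N))
                (fun j => 1 * (C N j * rising a j * rising b (S (N - j))) + 1 * (C N j * rising a (S j) * rising b (N - j)))).
      2:{ intros i Hi. rewrite !rising_S. rewrite minus_INR by lia. ring. }
      rewrite sf_lin.
      rewrite decomp_sum with (N := N) by (unfold N; lia). simpl pred.
      change (sum_f_R0 (fun j => C N j * rising a (S j) * rising b (N - j)) N) with
        (sum_f_R0 A M + C N N * rising a (S N) * rising b (N - N)).
      rewrite (sum_eq (fun i => C N (S i) * rising a (S i) * rising b (S (N - S i))) B).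
      2:{ intros i Hi. unfold B. f_equal. f_equal. unfold N; lia. }
      rewrite !Nat.sub_diag, !C_nn, !C_0, !Nat.sub_0_r. simpl rising. ring.
Qed.

Lemma rising_pos x k : 0 < x -> 0 < rising x k.
Proof.
  intros Hx; induction k; simpl; [lra|].
  apply Rmult_lt_0_compat; [auto|]. pose proof (pos_INR k); lra.
Qed.

Lemma pmf_sum N s : 0 < s -> sum_f_R0 (fun j => betabin_pmf N s s j) N = 1.
Proof.
  intros Hs. unfold betabin_pmf.
  rewrite (sum_eq _ (fun j => (C N j * rising s j * rising s (N - j)) * / rising (s + s) N))
    by (intros; reflexivity).
  rewrite <- scal_sum, vdm.
  assert (0 < rising (s + s) N) by (apply rising_pos; lra). field; lra.
Qed.

Lemma pmf_sym N s j : (j <= N)%nat -> betabin_pmf N s s (N - j) = betabin_pmf N s s j.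
Proof.
  intros H; unfold betabin_pmf.
  replace (N - (N - j))%nat with j by lia.
  rewrite <- (pascal_step1 N j H). unfold Rdiv; ring.
Qed.

Lemma pmf_mean N s : 0 < s -> sum_f_R0 (fun j => betabin_pmf N s s j * INR j) N = INR N / 2.
Proof.
  intros Hs.
  assert (E := sf_rev N (fun j => betabin_pmf N s s j * INR j)). simpl in E.
  rewrite (sum_eq (fun j => betabin_pmf N s s (N - j) * INR (N - j))
     (fun j => INR N * betabin_pmf N s s j + (-1) * (betabin_pmf N s s j * INR j))) in E.
  2:{ intros i Hi. rewrite pmf_sym, minus_INR by lia. ring. }
  rewrite sf_lin, pmf_sum in E by auto. lra.
Qed.

Lemma sumR_scal lo hi F u : sumR lo hi (fun i => u * F i) = u * sumR lo hi F.
Proof.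
  unfold sumR; generalize (seq lo (S hi - lo)); intro l; induction l; simpl. ring.
  rewrite IHl; ring.
Qed.

Lemma PS xi k x : (1 <= k)%nat -> (x <= xi k + xi (S k))%nat -> forall j,
  sumR 1 j (fun i => INR (upd xi k x i)) =
  sumR 1 j (fun i => INR (xi i)) + (if Nat.eqb j k then INR x - INR (xi k) else 0).
Proof.
  intros Hk Hx j; induction j.
  - rewrite !sumR_nil by lia. destruct (Nat.eqb_spec 0 k); [lia|ring].
  - rewrite !sumR_S by lia. rewrite IHj. unfold upd.
    destruct (Nat.eqb_spec (S j) k); destruct (Nat.eqb_spec j k);
      destruct (Nat.eqb_spec (S j) (S k)); try lia; subst; try ring.
    rewrite minus_INR, plus_INR by lia. ring.
Qed.

Definition aa n k := sin (PI * INR k / INR n).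
Definition TT n m (xi : config) k := sumR 1 k (fun i => INR (xi i)) - INR m * INR k / INR n.

Lemma f_eig_eq n m xi : f_eig n m xi = sumR 1 (n - 1) (fun k => aa n k * TT n m xi k).
Proof. reflexivity. Qed.

Lemma f_upd n m xi k x : (1 <= k <= n - 1)%nat -> (x <= xi k + xi (S k))%nat ->
  f_eig n m (upd xi k x) = f_eig n m xi + aa n k * (INR x - INR (xi k)).
Proof.
  intros Hk Hx. rewrite !f_eig_eq.
  rewrite (sumR_ext _ _ _ (fun j => 1 * (aa n j * TT n m xi j) +
     1 * (if Nat.eqb j k then aa n k * (INR x - INR (xi k)) else 0))).
  2:{ intros j Hj. unfold TT. rewrite PS by lia. destruct (Nat.eqb_spec j k); subst; ring. }
  rewrite sumR_lin, ind1 by lia. ring.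
Qed.

Lemma P_edge_f n m s xi k : 0 < s -> (1 <= k <= n - 1)%nat ->
  P_edge s k (f_eig n m) xi = f_eig n m xi + aa n k * (INR (xi (S k)) - INR (xi k)) / 2.
Proof.
  intros Hs Hk. unfold P_edge. rewrite sumR0.
  set (N := (xi k + xi (S k))%nat).
  rewrite (sum_eq _ (fun x => (f_eig n m xi - aa n k * INR (xi k)) * betabin_pmf N s s x
     + aa n k * (betabin_pmf N s s x * INR x))).
  2:{ intros i Hi. rewrite f_upd by (unfold N in Hi; lia). ring. }
  rewrite sf_lin, pmf_sum, pmf_mean by auto.
  unfold N; rewrite plus_INR. field.
Qed.

Lemma trig n k : (1 <= n)%nat -> (1 <= k)%nat ->
  aa n (k - 1) + aa n (S k) = 2 * cos (PI / INR n) * aa n k.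
Proof.
  intros Hn Hk. assert (INR n <> 0) by (apply not_0_INR; lia).
  unfold aa.
  replace (PI * INR (k - 1) / INR n) with (PI * INR k / INR n - PI / INR n)
    by (rewrite minus_INR by lia; simpl; field; auto).
  replace (PI * INR (S k) / INR n) with (PI * INR k / INR n + PI / INR n)
    by (rewrite S_INR; field; auto).
  rewrite sin_minus, sin_plus. ring.
Qed.

Lemma Delta n m xi k : (1 <= n)%nat -> (1 <= k)%nat ->
  INR (xi (S k)) - INR (xi k) = TT n m xi (S k) + TT n m xi (k - 1) - 2 * TT n m xi k.
Proof.
  intros Hn Hk. assert (INR n <> 0) by (apply not_0_INR; lia).
  destruct k as [|k']; [lia|]. unfold TT.
  rewrite Nat.sub_succ, Nat.sub_0_r.
  rewrite !sumR_S by lia. rewrite !S_INR. field; auto.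
Qed.

Lemma KEY M m xi : (1 <= M)%nat -> sumR 1 (S M) (fun i => INR (xi i)) = INR m ->
  sumR 1 M (fun k => aa (S M) k * (INR (xi (S k)) - INR (xi k))) =
  (2 * cos (PI / INR (S M)) - 2) * sumR 1 M (fun k => aa (S M) k * TT (S M) m xi k).
Proof.
  intros HM Hs.
  set (g := fun k => aa (S M) k * TT (S M) m xi (S k)).
  set (h := fun k => - (aa (S M) (S k) * TT (S M) m xi k)).
  rewrite (sumR_ext _ _ _ (fun k => 1 * (g k - g (k-1)%nat) + 1 * (1 * (h k - h (k-1)%nat)
     + (2 * cos (PI / INR (S M)) - 2) * (aa (S M) k * TT (S M) m xi k)))).
  2:{ intros k Hk. unfold g, h. replace (S (k-1)) with k by lia.
      rewrite (Delta (S M) m xi k) by lia.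
      assert (Tr := trig (S M) k ltac:(lia) ltac:(lia)).
      replace (aa (S M) (k-1)) with (2 * cos (PI / INR (S M)) * aa (S M) k - aa (S M) (S k)) by lra.
      ring. }
  rewrite sumR_lin, sumR_lin, !tele.
  unfold g, h.
  assert (INR (S M) <> 0) by (apply not_0_INR; lia).
  assert (a0 : aa (S M) 0 = 0) by (unfold aa; rewrite INR_0; replace (PI * 0 / INR (S M)) with 0 by (field; auto); apply sin_0).
  assert (an : aa (S M) (S M) = 0) by (unfold aa; replace (PI * INR (S M) / INR (S M)) with PI by (field; auto); apply sin_PI).
  assert (T0 : TT (S M) m xi 0 = 0) by (unfold TT; rewrite sumR_nil by lia; simpl; field; auto).
  assert (Tn : TT (S M) m xi (S M) = 0) by (unfold TT; rewrite Hs; field; auto).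
  rewrite a0, an, T0, Tn. ring.
Qed.

Theorem mainTheorem11 (n m : nat) (s : R) :
  (2 <= n)%nat -> (2 <= m)%nat -> 0 < s ->
  forall xi : config, in_Omega n m xi ->
  gen_BB n s (f_eig n m) xi =
  / INR (n - 1) * (cos (PI / INR n) - 1) * f_eig n m xi.
Proof.
  intros Hn Hm Hs xi [Hz Hsum].
  destruct n as [|M]; [lia|].
  unfold gen_BB.
  rewrite (sumR_ext _ _ _ (fun k => (/ INR (S M - 1) / 2) * (aa (S M) k * (INR (xi (S k)) - INR (xi k))))).
  2:{ intros k Hk. rewrite P_edge_f by (auto; lia). field. apply not_0_INR; lia. }
  rewrite sumR_scal, f_eig_eq.
  replace (S M - 1)%nat with M by lia.
  rewrite (KEY M m xi) by (auto; try lia; rewrite <- sumN_INR, Hsum; reflexivity).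
  field. apply not_0_INR; lia.
Qed.
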